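(* Let $G$ be an $r$-regular graph with $n$ vertices, $m$ edges and $r\ge 2$, and let $\mathcal Q(G)$ be its Q-graph. Let $a,b$ be distinct vertices of $\mathcal Q(G)$ with either $a,b\in V(G)$ or $a,b\in I(G)$. Then for each Laplacian eigenvalue $\theta\neq 2r$ of $G$, $\theta^{+}\in \mathrm{supp}_{L_{\mathcal Q(G)}}(\mathbf e_a-\mathbf e_b)$ if and only if $\theta^{-}\in \mathrm{supp}_{L_{\mathcal Q(G)}}(\mathbf e_a-\mathbf e_b)$. Moreover, if $\mathbf e_a-\mathbf e_b$ and $\mathbf e_c-\mathbf e_d$ are two pair states of $\mathcal Q(G)$ that are Laplacian strongly cospectral, then $\theta^+\in\Lambda^+_{ab,cd}$ if and only if $\theta^-\in\Lambda^+_{ab,cd}$, and $\theta^+\in\Lambda^-_{ab,cd}$ if and only if $\theta^-\in\Lambda^-_{ab,cd}$.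
   Context: For a simple graph $H$, $L_H=D_H-A_H$ is its Laplacian (degree matrix minus adjacency matrix), and $L_H=\sum_\theta \theta F_\theta$ its spectral decomposition over distinct eigenvalues, with $F_\theta$ the orthogonal projection onto the $\theta$-eigenspace. $\mathbf e_u$ is the characteristic vector of vertex $u$; for distinct vertices $a,b$, $\mathbf e_a-\mathbf e_b$ is a pair state, and $\mathrm{supp}_{L_H}(\mathbf e_a-\mathbf e_b)=\{\theta: F_\theta(\mathbf e_a-\mathbf e_b)\neq \mathbf 0\}$. Two pair states $\mathbf e_a-\mathbf e_b$, $\mathbf e_c-\mathbf e_d$ are Laplacian strongly cospectral if $F_\theta(\mathbf e_a-\mathbf e_b)=\pm F_\theta(\mathbf e_c-\mathbf e_d)$ for every eigenvalue $\theta$ of $L_H$. Set $\Lambda^{\pm}_{ab,cd}=\{\theta\in\mathrm{supp}_{L_H}(\mathbf e_a-\mathbf e_b): F_\theta(\mathbf e_a-\mathbf e_b)=\pm F_\theta(\mathbf e_c-\mathbf e_d)\}$ (here $H=\mathcal Q(G)$). The Q-graph $\mathcal Q(G)$ is obtained from $G$ by inserting a new vertex into each edge of $G$ and joining by an edge each pair of new vertices lying on adjacent (incident) edges of $G$; the set of new vertices is $I(G)$, so $V(\mathcal Q(G))=V(G)\cup I(G)$. For a Laplacian eigenvalue $\theta$ of $G$, $\theta^{\pm}=\frac12\big(\theta+2+r\pm\sqrt{(r+2-\theta)^2+4\theta}\big)$; these are Laplacian eigenvalues of $\mathcal Q(G)$. *)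

(* Defs.v *)
From HB Require Import structures.
From mathcomp Require Import all_boot all_order all_algebra.
Set Implicit Arguments. Unset Strict Implicit. Unset Printing Implicit Defensive.
Import Order.TTheory GRing.Theory Num.Theory.
Local Open Scope ring_scope.

(* A simple graph on a finite type T is given by an adjacency relation
   [adj : rel T], assumed symmetric and irreflexive where needed. *)

Section Laplacian.
Variables (R : rcfType) (T : finType) (adj : rel T).

Definition deg (x : T) : nat := #|[set y | adj x y]|.

Definition lap : 'M[R]_#|T| :=
  \matrix_(i, j) (if i == j then (deg (enum_val i))%:R
                  else - (adj (enum_val i) (enum_val j))%:R).

Definition evec (u : T) : 'rV[R]_#|T| := delta_mx 0 (enum_rank u).

End Laplacian.

Section Spectral.
Variables (R : rcfType) (n : nat).

(* Orthogonal projection onto the theta-eigenspace of A (row-vector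
   convention: v lies in the eigenspace iff v *m A = theta *: v).
   With B a row basis of the eigenspace, F = B^T (B B^T)^-1 B. *)
Definition eigproj (A : 'M[R]_n) (theta : R) : 'M[R]_n :=
  let B := row_base (eigenspace A theta) in
  B^T *m invmx (B *m B^T) *m B.

Definition in_supp (A : 'M[R]_n) (x : 'rV[R]_n) (theta : R) : Prop :=
  x *m eigproj A theta != 0.

Definition strongly_cospectral (A : 'M[R]_n) (x y : 'rV[R]_n) : Prop :=
  forall theta, eigenvalue A theta ->
    x *m eigproj A theta = y *m eigproj A theta \/
    x *m eigproj A theta = - (y *m eigproj A theta).

Definition in_LambdaP (A : 'M[R]_n) (x y : 'rV[R]_n) (theta : R) : Prop :=
  in_supp A x theta /\ x *m eigproj A theta = y *m eigproj A theta.
Definition in_LambdaM (A : 'M[R]_n) (x y : 'rV[R]_n) (theta : R) : Prop :=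
  in_supp A x theta /\ x *m eigproj A theta = - (y *m eigproj A theta).

End Spectral.

Section QGraph.
Variables (V : finType) (adj : rel V).

Definition is_edge (s : {set V}) : bool :=
  [exists x, exists y, adj x y && (s == [set x; y])].

Definition edgeT := {s : {set V} | is_edge s}.

(* vertex set of Q(G): V(G) (inl) together with I(G) (inr, one new
   vertex per edge of G) *)
Definition QV := (V + edgeT)%type.

Definition isV (u : QV) : bool := if u is inl _ then true else false.

Definition qadj (u w : QV) : bool :=
  match u, w with
  | inl x, inl y => false
  | inl x, inr f => x \in val f
  | inr f, inl x => x \in val f
  | inr f, inr g => (f != g) && [exists x, (x \in val f) && (x \in val g)]
  end.

End QGraph.

Definition theta_p (R : rcfType) (r : nat) (theta : R) : R :=
  (theta + 2 + r%:R + Num.sqrt ((r%:R + 2 - theta) ^+ 2 + 4 * theta)) / 2.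
Definition theta_m (R : rcfType) (r : nat) (theta : R) : R :=
  (theta + 2 + r%:R - Num.sqrt ((r%:R + 2 - theta) ^+ 2 + 4 * theta)) / 2.

(* Main.v *)
Require Import Defs.
From HB Require Import structures.
From mathcomp Require Import all_boot all_order all_algebra.
From mathcomp Require Import polyrcf complex.
From mathcomp Require Import ring lra.
Set Implicit Arguments. Unset Strict Implicit. Unset Printing Implicit Defensive.
Import Order.TTheory GRing.Theory Num.Theory.
Local Open Scope ring_scope.


Section LA.
Variable R : rcfType.

Lemma dotE n (u v : 'rV[R]_n) : (u *m v^T) 0 0 = \sum_i u 0 i * v 0 i.
Proof. by rewrite !mxE; apply: eq_bigr => i _; rewrite mxE. Qed.

Lemma dot_self_ge0 n (v : 'rV[R]_n) : 0 <= (v *m v^T) 0 0.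
Proof. by rewrite dotE; apply: sumr_ge0 => i _; by rewrite -expr2 sqr_ge0. Qed.

Lemma dot_self0 n (v : 'rV[R]_n) : (v *m v^T) 0 0 = 0 -> v = 0.
Proof.
rewrite dotE => H0.
have H : \sum_i v 0 i ^+ 2 = 0 by rewrite -[RHS]H0; apply: eq_bigr => i _; rewrite expr2.
apply/rowP => i; rewrite mxE.
move: (psumr_eq0P (fun j _ => (sqr_ge0 (v 0 j))) H) => /(_ i isT).
by move/eqP; rewrite sqrf_eq0 => /eqP.
Qed.

Lemma mx11_eq0 (M : 'M[R]_1) : (M = 0) <-> (M 0 0 = 0).
Proof.
split=> [->|H]; first by rewrite mxE.
by apply/matrixP => i j; rewrite !ord1 H mxE.
Qed.

Lemma BBt_unit n m (B : 'M[R]_(m,n)) : row_free B -> B *m B^T \in unitmx.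
Proof.
move=> fB; rewrite -row_free_unit; apply: inj_row_free => v Hv.
have: (v *m B) *m (v *m B)^T = 0 by rewrite trmx_mul !mulmxA -(mulmxA v) Hv !mul0mx.
move/mx11_eq0/dot_self0/eqP; rewrite mulmx_free_eq0 //; exact/eqP.
Qed.

Lemma mul_tr_rows n m (z : 'rV[R]_n) (X : 'M[R]_(m,n)) :
  (forall j, z *m (row j X)^T = 0) -> z *m X^T = 0.
Proof.
move=> H; apply/rowP => j; have /mx11_eq0 Hj := H j.
rewrite [RHS]mxE -Hj !mxE; apply: eq_bigr => k _; by rewrite !mxE.
Qed.

Definition orth n (A : 'M[R]_n) (th : R) (z : 'rV[R]_n) :=
  forall w : 'rV[R]_n, w *m A = th *: w -> z *m w^T = 0.

Lemma proj_free0 n k (B : 'M[R]_(k,n)) (z : 'rV[R]_n) : row_free B ->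
  (z *m (B^T *m invmx (B *m B^T) *m B) = 0) <-> (z *m B^T = 0).
Proof.
move=> fB; have uG := BBt_unit fB.
split => H; last by rewrite !mulmxA H !mul0mx.
apply/eqP; move: H; rewrite !mulmxA => /eqP.
by rewrite mulmx_free_eq0 // mulmx_free_eq0 // row_free_unit unitmx_inv.
Qed.

Lemma eigproj0 n (A : 'M[R]_n) th z : z *m eigproj A th = 0 <-> orth A th z.
Proof.
rewrite /eigproj proj_free0; last exact: row_base_free.
set B := row_base _.
split.
- move=> H w Hw.
  have: (w <= B)%MS by rewrite eq_row_base; apply/eigenspaceP.
  by case/submxP => D ->; rewrite trmx_mul mulmxA H mul0mx.
- move=> H; apply: mul_tr_rows => j; apply: H; apply/eigenspaceP.
  by rewrite -(eq_row_base (eigenspace A th)) row_sub.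
Qed.

Local Notation cRe := (@complex.Re _).
Local Notation cIm := (@complex.Im _).
Lemma Re_sum (I : finType) (F : I -> R[i]) : cRe (\sum_i F i) = \sum_i cRe (F i).
Proof. apply: (big_rec2 (fun x y => cRe x = y)) => // i a b _ <-; by case: (F i); case: a. Qed.
Lemma Im_sum (I : finType) (F : I -> R[i]) : cIm (\sum_i F i) = \sum_i cIm (F i).
Proof. apply: (big_rec2 (fun x y => cIm x = y)) => // i a b _ <-; by case: (F i); case: a. Qed.
Lemma Re_mulr (z : R[i]) k : cRe (z * (real_complex R k)) = cRe z * k.
Proof. by case: z => a b /=; rewrite mulr0 subr0. Qed.
Lemma Im_mulr (z : R[i]) k : cIm (z * (real_complex R k)) = cIm z * k.
Proof. by case: z => a b /=; rewrite mulr0 add0r. Qed.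
Lemma Re_mul (z w : R[i]) : cRe (z * w) = cRe z * cRe w - cIm z * cIm w.
Proof. by case: z; case: w. Qed.
Lemma Im_mul (z w : R[i]) : cIm (z * w) = cRe z * cIm w + cIm z * cRe w.
Proof. by case: z; case: w => a b c d /=; rewrite addrC. Qed.


Lemma real_eigvec n (A : 'M[R]_n) : A^T = A -> forall m (W : 'M[R]_(m,n)),
  (W *m A <= W)%MS -> W != 0 ->
  exists mu, exists2 v : 'rV[R]_n, ((v <= W)%MS /\ v != 0) & v *m A = mu *: v.
Proof.
move=> As m W WA W0.
set B := row_base W.
have k0 : (0 < \rank W)%N by rewrite lt0n mxrank_eq0.
have BW : (B <= W)%MS by rewrite eq_row_base.
have BA : (B *m A <= B)%MS.
  by rewrite (eqmxMr A (eq_row_base W)) !eq_row_base.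
set M := B *m A *m pinvmx B.
have BM : M *m B = B *m A by rewrite mulmxKpV.
set Mc := map_mx (real_complex R) M.
have [om] : exists om, eigenvalue Mc om.
  have /closed_rootP [x rx] : size (char_poly Mc) != 1%N.
    by rewrite size_char_poly; case: (\rank W) k0.
  by exists x; rewrite eigenvalue_root_char.
case/eigenvalueP => u Hu u0.
set u1 := map_mx cRe u. set u2 := map_mx cIm u.
set a := cRe om. set b := cIm om.
have H1 : u1 *m M = a *: u1 - b *: u2.
  apply/rowP => j; have /rowP/(_ j)/(congr1 (@complex.Re R)) := Hu.
  rewrite /= !mxE Re_sum Re_mul => E.
  rewrite -E; apply: eq_bigr => i _; by rewrite /u1 /Mc !mxE Re_mulr.
have H2 : u2 *m M = b *: u1 + a *: u2.
  apply/rowP => j; have /rowP/(_ j)/(congr1 (@complex.Im R)) := Hu.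
  rewrite /= !mxE Im_sum Im_mul => E.
  rewrite addrC -E; apply: eq_bigr => i _; by rewrite /u2 /Mc !mxE Im_mulr.
set x := u1 *m B. set y := u2 *m B.
have Hx : x *m A = a *: x - b *: y.
  by rewrite /x -mulmxA -BM mulmxA H1 mulmxBl -!scalemxAl.
have Hy : y *m A = b *: x + a *: y.
  by rewrite /y -mulmxA -BM mulmxA H2 mulmxDl -!scalemxAl.
have sym : x *m A *m y^T = x *m (y *m A)^T by rewrite [(y *m A)^T]trmx_mul As mulmxA.
rewrite Hx Hy in sym.
have xy0 : x != 0 \/ y != 0.
  have fB : row_free B := row_base_free W.
  case: (eqVneq x 0) => [x0|]; last by left.
  case: (eqVneq y 0) => [y0|]; last by right.
  exfalso; move/eqP: u0; apply.
  move/eqP: x0; rewrite /x mulmx_free_eq0 // => /eqP /rowP x0.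
  move/eqP: y0; rewrite /y mulmx_free_eq0 // => /eqP /rowP y0.
  apply/rowP => i; move: (x0 i) (y0 i); rewrite !mxE.
  by case: (u 0 i) => c d /= -> ->.
have b0 : b = 0.
  apply/eqP; apply: contraT => bn0; exfalso.
  move: sym; rewrite mulmxBl raddfD /= !linearZ /= mulmxDr -!scalemxAl -!scalemxAr.
  move/matrixP/(_ 0 0); rewrite !mxE => E.
  have E2 : b * ((x *m x^T) 0 0 + (y *m y^T) 0 0) = 0.
    rewrite !mxE; move: E.
    move: (\sum_j x 0 j * x^T j 0) (\sum_j y 0 j * y^T j 0) (\sum_j x 0 j * y^T j 0) => p q r E'.
    have -> : b * (p + q) = (b * p + a * r) - (a * r - b * q) by ring.
    by rewrite E' subrr.
  move/eqP: E2; rewrite mulf_eq0 (negPf bn0) /= => /eqP E3.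
  have Ex : (x *m x^T) 0 0 = 0.
    apply/eqP; rewrite eq_le dot_self_ge0 andbT -E3 lerDl; exact: dot_self_ge0.
  have Ey : (y *m y^T) 0 0 = 0 by move: E3; rewrite Ex add0r.
  by case: xy0; rewrite ?(dot_self0 Ex) ?(dot_self0 Ey) eqxx.
rewrite b0 !scale0r ?subr0 ?add0r in Hx Hy.
have xW : (x <= W)%MS by rewrite /x (submx_trans (submxMl _ _)).
have yW : (y <= W)%MS by rewrite /y (submx_trans (submxMl _ _)).
exists a; case: xy0 => ?; [exists x | exists y] => //.

Qed.

Lemma orth_all0 n (A : 'M[R]_n) : A^T = A -> forall z : 'rV[R]_n,
  (forall mu (w : 'rV[R]_n), w *m A = mu *: w -> z *m w^T = 0) -> z = 0.
Proof.
move=> As z Hz.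
set s := rootsR (char_poly A).
set E := (\sum_(i < size s) eigenspace A s`_i)%MS.
have Eperp : forall m (X : 'M[R]_(m,n)), (X <= E)%MS -> z *m X^T = 0.
  move=> m X /sub_sumsmxP [D ->]; rewrite raddf_sum mulmx_sumr /=.
  apply: big1 => i _; rewrite trmx_mul mulmxA.
  have ->: z *m (eigenspace A s`_i)^T = 0.
    by apply: mul_tr_rows => j; apply: (Hz s`_i); apply/eigenspaceP; exact: row_sub.
  by rewrite mul0mx.
set W := kermx E^T.
apply/eqP; apply: contraT => z0; exfalso.
have zW : (z <= W)%MS by rewrite sub_kermx (Eperp _ _ (submx_refl E)).
have W0 : W != 0 by apply: contraNneq z0 => W0; move: zW; rewrite W0 submx0.
have EA : (E *m A <= E)%MS.
  apply: stablemx_sums => i.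
  by have /eigenspaceP -> := submx_refl (eigenspace A s`_i); rewrite scalemx_sub.
have WA : (W *m A <= W)%MS.
  rewrite sub_kermx; case/submxP: EA => D ED.
  have : (E *m A)^T = A *m E^T by rewrite trmx_mul As.
  rewrite ED trmx_mul => H.
  by rewrite -mulmxA -H mulmxA mulmx_ker mul0mx.
have [mu [v [vW v0] Hv]] := real_eigvec As WA W0.
have mus : mu \in s.
  have: eigenvalue A mu by apply/eigenvalueP; exists v.
  rewrite eigenvalue_root_char => rt.
  have := roots_on_rootsR (monic_neq0 (char_poly_monic A)) mu.
  by rewrite rt andbT => <-; rewrite in_itv.
have vE : (v <= E)%MS.
  have im : (index mu s < size s)%N by rewrite index_mem.
  apply: (sumsmx_sup (Ordinal im)) => //=.
  by rewrite (nth_index 0 mus); apply/eigenspaceP.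
have vv : v *m v^T = 0.
  case/submxP: vE => D vD.
  by rewrite {2}vD trmx_mul mulmxA (sub_kermxP vW) mul0mx.
move/eqP: v0; apply; apply: dot_self0; by rewrite vv mxE.
Qed.

Lemma sym_complete n (A : 'M[R]_n) : A^T = A -> forall th (s : 'rV[R]_n),
  (forall mu (w : 'rV[R]_n), mu != th -> w *m A = mu *: w -> s *m w^T = 0) ->
  s *m A = th *: s.
Proof.
move=> As th s H; apply/eqP; rewrite -subr_eq0; apply/eqP.
apply: (orth_all0 As) => mu w Hw.
rewrite mulmxBl -scalemxAl -mulmxA.
have -> : A *m w^T = (w *m A)^T by rewrite trmx_mul As.
rewrite Hw linearZ /= -scalemxAr.
case: (eqVneq mu th) => [->|ne]; first by rewrite subrr.
by rewrite (H mu w ne Hw) !scaler0 subrr.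
Qed.

End LA.


Section Lap.
Variable R : rcfType.

Lemma deg_sum (T : finType) (e : rel T) u :
  (deg e u)%:R = \sum_(w : T) (e u w)%:R :> R.
Proof.
rewrite /deg -sum1_card natr_sum big_mkcond /=.
by apply: eq_bigr => w _; rewrite inE; case: (e u w).
Qed.

Lemma sum_rank (T : finType) (F : 'I_#|T| -> R) :
  \sum_i F i = \sum_(w : T) F (enum_rank w).
Proof. by rewrite (reindex (@enum_rank T)) //=; apply: onW_bij; exact: enum_rank_bij. Qed.

Lemma lap_row (T : finType) (e : rel T) : symmetric e -> irreflexive e ->
  forall (z : 'rV[R]_#|T|) (u : T),
  (z *m lap R e) 0 (enum_rank u) =
  \sum_(w : T) (e u w)%:R * (z 0 (enum_rank u) - z 0 (enum_rank w)).
Proof.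
move=> es ei z u.
transitivity ((deg e u)%:R * z 0 (enum_rank u) - \sum_(w : T) (e u w)%:R * z 0 (enum_rank w)); last first.
  rewrite deg_sum big_distrl -sumrB; apply: eq_bigr => w _; by rewrite mulrBr.
rewrite mxE sum_rank (bigD1 u) //= mxE eqxx enum_rankK mulrC.
congr (_ + _); rewrite [in RHS](bigD1 u) //= ei mul0r add0r -sumrN.
apply: eq_bigr => w wu; rewrite mxE (inj_eq enum_rank_inj) (negPf wu) !enum_rankK es.
by rewrite mulrN mulrC.
Qed.
End Lap.


Section QComb.
Variables (R : rcfType) (V : finType) (adj : rel V).
Hypothesis adj_sym : symmetric adj.
Hypothesis adj_irr : irreflexive adj.
Local Notation E := (edgeT adj).

Lemma edge_ends (f : E) : exists p q, [/\ adj p q, p != q & val f = [set p; q]].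
Proof.
have /existsP [p /existsP [q /andP [apq /eqP ->]]] := valP f.
exists p, q; split => //; apply: contraTneq apq => ->; by rewrite adj_irr.
Qed.

Lemma qadj_sym : symmetric (@qadj V adj).
Proof.
move=> [x|f] [y|g] //=; rewrite eq_sym; congr (_ && _).
by apply/existsP/existsP => [] [z /andP [? ?]]; exists z; apply/andP.
Qed.

Lemma qadj_irr : irreflexive (@qadj V adj).
Proof. by move=> [x|f] //=; rewrite eqxx. Qed.


Lemma sum_set2 (p q : V) (h : V -> R) : p != q ->
  \sum_(y : V) (y \in [set p; q])%:R * h y = h p + h q.
Proof.
move=> pq; transitivity (\sum_(y in [set p; q]) h y).
  by rewrite [RHS]big_mkcond /=; apply: eq_bigr => y _; case: (y \in _); rewrite ?mul1r ?mul0r.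
by rewrite big_setU1 ?big_set1 // in_set1.
Qed.

Lemma sum_edge_sets (F : {set V} -> R) :
  \sum_(f : E) F (val f) = \sum_(s : {set V} | is_edge adj s) F s.
Proof.
have := big_sub_cond (is_edge adj) predT F.
rewrite /= => H. symmetry. etransitivity; last exact: H. by apply: eq_bigl => s; rewrite andbT.
Qed.

Lemma sum_edges_at (v : V) (g : {set V} -> R) :
  \sum_(f : E) (v \in val f)%:R * g (val f) =
  \sum_(w : V) (adj v w)%:R * g [set v; w].
Proof.
rewrite (sum_edge_sets (fun s => (v \in s)%:R * g s)).
transitivity (\sum_(s in [set [set v; w] | w in [set w | adj v w]]) g s).
  rewrite big_mkcond [RHS]big_mkcond /=; apply: eq_bigr => s _.
  case: (boolP (s \in _)) => [/imsetP [w]|nI].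
    rewrite inE => vw ->.
    have -> : is_edge adj [set v; w].
      by apply/existsP; exists v; apply/existsP; exists w; rewrite vw eqxx.
    by rewrite set21 mul1r.
  case: (boolP (is_edge adj s)) => //= /existsP [x /existsP [y /andP [axy /eqP sxy]]].
  case: (boolP (v \in s)) => vs; rewrite ?mul0r ?mul1r //.
  exfalso; move/negP: nI; apply; move: vs; rewrite sxy => /set2P [] ->.
    by apply/imsetP; exists y; rewrite ?inE.
  by apply/imsetP; exists x; rewrite ?inE 1?adj_sym // setUC.
rewrite big_imset /=; last first.
  move=> w w'; rewrite !inE => vw vw' /setP /(_ w); rewrite set22 => /esym /set2P [] // wv.
  by rewrite wv adj_irr in vw.
rewrite big_mkcond /=; apply: eq_bigr => w _; rewrite inE.
by case: (adj v w); rewrite ?mul1r ?mul0r.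
Qed.

Definition shr (e f : E) := [exists x, (x \in val e) && (x \in val f)].
Lemma share_ind (e f : E) p q : p != q -> val e = [set p; q] ->
  ((e != f) && [exists x, (x \in val e) && (x \in val f)])%:R =
  (p \in val f)%:R + (q \in val f)%:R - 2 * (f == e)%:R :> R.
Proof.
move=> pq ep; case: (eqVneq e f) => [<-|ne].
  rewrite ep set21 set22 /=; ring.
have share : [exists x, (x \in val e) && (x \in val f)] = (p \in val f) || (q \in val f).
  rewrite ep; apply/existsP/orP => [[x /andP [/set2P [] -> ->]]|[pf|qf]].
  - by left.
  - by right.
  - by exists p; rewrite set21 pf.
  - by exists q; rewrite set22 qf.
have nboth : ~~ ((p \in val f) && (q \in val f)).
  apply/negP => /andP [pf qf]; have [x [y [axy xy fxy]]] := edge_ends f.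
  have : [set p; q] == val f.
    rewrite eqEcard fxy cards2 cards2 xy pq andbT.
    by apply/subsetP => z /set2P [] ->; rewrite -fxy.
  by rewrite -ep => /eqP /val_inj fe; rewrite fe eqxx in ne.
rewrite share /=.
by move: nboth; case: (p \in val f); case: (q \in val f) => //= _; ring.
Qed.

Lemma sum_share (e : E) p q (g : E -> R) : p != q -> val e = [set p; q] ->
  \sum_(f : E) ((e != f) && [exists x, (x \in val e) && (x \in val f)])%:R * g f =
  \sum_(f : E) (p \in val f)%:R * g f + \sum_(f : E) (q \in val f)%:R * g f - 2 * g e.
Proof.
move=> pq ep; under eq_bigr do rewrite (share_ind _ pq ep).
have H : \sum_(f : E) (f == e)%:R * g f = g e.
  rewrite (bigD1 e) //= eqxx mul1r big1 ?addr0 // => f /negPf ->; by rewrite mul0r.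
rewrite -H mulr_sumr -!big_split /= -sumrB; apply: eq_bigr => f _; ring.
Qed.

Lemma edges_at_card v : \sum_(f : E) (v \in val f)%:R = (deg adj v)%:R :> R.
Proof.
rewrite deg_sum.
have := sum_edges_at v (fun _ => 1); under eq_bigr do rewrite mulr1.
by move=> ->; apply: eq_bigr => w _; rewrite mulr1.
Qed.

End QComb.


Section QSpec.
Variables (R : rcfType) (V : finType) (adj : rel V) (r : nat).
Hypothesis adj_sym : symmetric adj.
Hypothesis adj_irr : irreflexive adj.
Hypothesis regular : forall x : V, deg adj x = r.
Local Notation E := (edgeT adj).
Local Notation T := (QV adj).
Local Notation LG := (lap R adj).
Local Notation LQ := (lap R (@qadj V adj)).
Local Notation rk := enum_rank.

Definition fpoly (th l : R) := l ^+ 2 - (r%:R + 2 + th) * l + (r%:R + 1) * th.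

Definition sigE (x : 'rV[R]_#|V|) (s : {set V}) := \sum_(w : V) (w \in s)%:R * x 0 (rk w).

Definition qval (al : R) (x : 'rV[R]_#|V|) (u : T) : R :=
  match u with inl v => al * x 0 (rk v) | inr f => sigE x (val f) end.

Definition phiQ al x : 'rV[R]_#|{: T}| := \row_i qval al x (enum_val i).

Lemma phiQE al x u : phiQ al x 0 (rk u) = qval al x u.
Proof. by rewrite mxE enum_rankK. Qed.

Lemma sum_adj v : \sum_(w : V) (adj v w)%:R = r%:R :> R.
Proof. by rewrite -deg_sum regular. Qed.

Lemma LG_row (x : 'rV[R]_#|V|) v : (x *m LG) 0 (rk v) =
  r%:R * x 0 (rk v) - \sum_(w : V) (adj v w)%:R * x 0 (rk w).
Proof.
rewrite lap_row // -(sum_adj v) big_distrl -sumrB; apply: eq_bigr => w _; by rewrite mulrBr.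
Qed.

Lemma nbr_sum th (x : 'rV[R]_#|V|) v : x *m LG = th *: x ->
  \sum_(w : V) (adj v w)%:R * x 0 (rk w) = (r%:R - th) * x 0 (rk v).
Proof.
move=> Hx; have := LG_row x v; rewrite Hx mxE => H.
by apply/eqP; rewrite -subr_eq0; apply/eqP; move: H; move: (\sum_w _) => S H; rewrite mulrBl H; ring.
Qed.

Lemma sig2 (x : 'rV[R]_#|V|) p q : p != q -> sigE x [set p; q] = x 0 (rk p) + x 0 (rk q).
Proof. by move=> pq; rewrite /sigE sum_set2. Qed.

Lemma edge_sum_at (v : V) (c : R) (x : 'rV[R]_#|V|) :
  \sum_(f : E) (v \in val f)%:R * (c - sigE x (val f)) =
  r%:R * c - r%:R * x 0 (rk v) - \sum_(w : V) (adj v w)%:R * x 0 (rk w).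
Proof.
rewrite (sum_edges_at adj_sym adj_irr v (fun s => c - sigE x s)).
transitivity (\sum_(w : V) ((adj v w)%:R * (c - x 0 (rk v)) - (adj v w)%:R * x 0 (rk w))).
  apply: eq_bigr => w _; case: (boolP (adj v w)) => vw; last by rewrite !mul0r subrr.
  rewrite sig2; first by rewrite !mul1r; ring.
  by apply: contraTneq vw => ->; rewrite adj_irr.
by rewrite sumrB -big_distrl /= sum_adj; ring.
Qed.

Lemma eq_from (a b c : R) : a - b = c -> c = 0 -> a = b.
Proof. by move=> H c0; apply/eqP; rewrite -subr_eq0 H c0. Qed.

Lemma LQ_inl (z : 'rV[R]_#|{: T}|) v : (z *m LQ) 0 (rk (inl v)) =
  \sum_(f : E) (v \in val f)%:R * (z 0 (rk (inl v)) - z 0 (rk (inr f))).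
Proof.
rewrite lap_row; [|exact: qadj_sym|exact: qadj_irr].
by rewrite big_sumType /= big1 ?add0r // => y _; rewrite mul0r.
Qed.

Lemma LQ_inr (z : 'rV[R]_#|{: T}|) e p q : p != q -> val e = [set p; q] ->
  (z *m LQ) 0 (rk (inr e)) =
  (z 0 (rk (inr e)) - z 0 (rk (inl p))) + (z 0 (rk (inr e)) - z 0 (rk (inl q))) +
  \sum_(f : E) (p \in val f)%:R * (z 0 (rk (inr e)) - z 0 (rk (inr f))) +
  \sum_(f : E) (q \in val f)%:R * (z 0 (rk (inr e)) - z 0 (rk (inr f))).
Proof.
move=> pq ep; rewrite lap_row; [|exact: qadj_sym|exact: qadj_irr].
rewrite big_sumType /= ep sum_set2 // -ep.
rewrite (sum_share adj_irr (fun f => z 0 (rk (inr e)) - z 0 (rk (inr f))) pq ep).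
by rewrite subrr mulr0 subr0 addrA.
Qed.

Lemma phiLQ_inl al x v : (phiQ al x *m LQ) 0 (rk (inl v)) =
  \sum_(f : E) (v \in val f)%:R * (al * x 0 (rk v) - sigE x (val f)).
Proof. by rewrite LQ_inl; apply: eq_bigr => f _; rewrite !phiQE. Qed.

Lemma phiLQ_inr al x e p q : p != q -> val e = [set p; q] ->
  (phiQ al x *m LQ) 0 (rk (inr e)) =
  (sigE x (val e) - al * x 0 (rk p)) + (sigE x (val e) - al * x 0 (rk q)) +
  \sum_(f : E) (p \in val f)%:R * (sigE x (val e) - sigE x (val f)) +
  \sum_(f : E) (q \in val f)%:R * (sigE x (val e) - sigE x (val f)).
Proof.
move=> pq ep; rewrite (LQ_inr _ pq ep) !phiQE /=.
by congr (_ + _ + _ + _); apply: eq_bigr => f _; rewrite !phiQE.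
Qed.

Lemma phi_eig th l (x : 'rV[R]_#|V|) : x *m LG = th *: x -> fpoly th l = 0 ->
  phiQ (2 + th - l) x *m LQ = l *: phiQ (2 + th - l) x.
Proof.
move=> Hx f0; apply/rowP => i; rewrite -(enum_valK i); case: (enum_val i) => [v|e].
  rewrite phiLQ_inl edge_sum_at (nbr_sum v Hx) mxE phiQE /=.
  apply: (eq_from (c := fpoly th l * x 0 (rk v))); last by rewrite f0 mul0r.
  rewrite /fpoly; ring.
have [p [q [apq pq ep]]] := edge_ends adj_irr e.
rewrite (phiLQ_inr _ _ pq ep) !edge_sum_at (nbr_sum p Hx) (nbr_sum q Hx) mxE phiQE /=.
rewrite ep sig2 //; ring.
Qed.

Lemma edges_sum_r v : \sum_(f : E) (v \in val f)%:R = r%:R :> R.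
Proof. by rewrite edges_at_card // regular. Qed.

Lemma eig_phi th l (z : 'rV[R]_#|{: T}|) : z *m LQ = l *: z -> fpoly th l = 0 ->
  th != 2 * r%:R ->
  exists2 x : 'rV[R]_#|V|, x *m LG = th *: x & z = phiQ (2 + th - l) x.
Proof.
move=> Hz f0 thn; set al := 2 + th - l.
have al0 : al != 0.
  apply: contra thn => /eqP a0; apply/eqP.
  apply: (eq_from (c := fpoly th l - al ^+ 2 - (r%:R - 2 - th) * al)).
    by rewrite /fpoly /al; ring.
  by rewrite f0 a0; ring.
have r1 : r%:R + 1 - l != 0.
  apply/eqP => r1.
  have : fpoly th l = - (r%:R + 1 - l) * (l - 1 - th) - (r%:R + 1) by rewrite /fpoly; ring.
  rewrite r1 f0 mulNr mul0r oppr0 sub0r => H; have := ler0n R r; lra.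
have E1 v : \sum_(f : E) (v \in val f)%:R * z 0 (rk (inr f)) = (r%:R - l) * z 0 (rk (inl v)).
  have := LQ_inl z v; rewrite Hz mxE.
  under eq_bigr do rewrite mulrBr.
  rewrite sumrB -big_distrl /= edges_sum_r => H.
  apply: (eq_from (c := 0)) => //; rewrite mulrBl H; ring.
have E2 e : al * z 0 (rk (inr e)) = sigE (\row_i z 0 (rk (inl (enum_val i)))) (val e).
  have [p [q [apq pq ep]]] := edge_ends adj_irr e.
  rewrite ep sig2 // !mxE !enum_rankK.
  have := LQ_inr z pq ep; rewrite Hz mxE.
  under [X in _ = _ + _ + X + _ -> _]eq_bigr do rewrite mulrBr.
  under [X in _ = _ + _ + _ + X -> _]eq_bigr do rewrite mulrBr.
  rewrite !sumrB -!big_distrl /= !edges_sum_r !E1 => H.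
  apply: (mulfI r1).
  move: H; rewrite /al; move: (z 0 _) (z 0 _) (z 0 _) => Z1 Z2 Z3 H.
  have H0 : l * Z3 - (Z3 - Z2 + (Z3 - Z1) + (r%:R * Z3 - (r%:R - l) * Z2) +
    (r%:R * Z3 - (r%:R - l) * Z1)) = 0 by rewrite H subrr.
  apply: (eq_from (c := Z3 * fpoly th l - (l * Z3 - (Z3 - Z2 + (Z3 - Z1) + (r%:R * Z3 - (r%:R - l) * Z2) +
    (r%:R * Z3 - (r%:R - l) * Z1))))).
    rewrite /fpoly; ring.
  by rewrite H0 f0 mulr0 subr0.
set x : 'rV[R]_#|V| := \row_i (al^-1 * z 0 (rk (inl (enum_val i)))).
have xE v : x 0 (rk v) = al^-1 * z 0 (rk (inl v)) by rewrite mxE enum_rankK.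
have zphi : z = phiQ al x.
  apply/rowP => i; rewrite -(enum_valK i); case: (enum_val i) => [v|e]; rewrite phiQE /=.
    by rewrite xE mulVKf.
  apply: (mulfI al0); rewrite E2 /sigE mulr_sumr; apply: eq_bigr => w _.
  by rewrite !mxE !enum_rankK mulrCA mulVKf.
exists x => //; clearbody x.
apply/rowP => i; rewrite -(enum_valK i); set v := enum_val i.
have H1 : \sum_(f:E) (v \in val f)%:R * sigE x (val f) = (r%:R - l) * (al * x 0 (rk v)).
  rewrite (_ : \sum_(f:E) _ = \sum_(f:E) (v \in val f)%:R * z 0 (rk (inr f))); last first.
    by apply: eq_bigr => f _; rewrite zphi phiQE.
  by rewrite E1 zphi phiQE.
have S1 : \sum_(f:E) (v \in val f)%:R * sigE x (val f) =
    r%:R * x 0 (rk v) + \sum_w (adj v w)%:R * x 0 (rk w).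
  have := edge_sum_at v 0 x; under eq_bigr do rewrite sub0r mulrN.
  rewrite sumrN => H; apply/eqP; rewrite -eqr_opp H; apply/eqP; ring.
rewrite LG_row [RHS]mxE.
apply: (eq_from (c := - (fpoly th l * x 0 (rk v)) -
  (r%:R * x 0 (rk v) + \sum_w (adj v w)%:R * x 0 (rk w) - (r%:R - l) * (al * x 0 (rk v))))).
  rewrite /fpoly /al; ring.
by rewrite -S1 H1 subrr f0 mul0r; ring.
Qed.

End QSpec.


Section Scal.
Variables (R : rcfType) (r : nat).

Definition Dsc (th : R) := (r%:R + 2 - th) ^+ 2 + 4 * th.

Lemma Dsc_gt0 (th : R) : 0 < Dsc th.
Proof.
rewrite /Dsc (_ : _ + _ = (th - r%:R) ^+ 2 + 4 * (r%:R + 1)); last by ring.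
apply: ltr_wpDl; first exact: sqr_ge0.
by apply: mulr_gt0 => //; rewrite ltr_wpDl ?ler0n.
Qed.

Lemma sqD (th : R) : Num.sqrt (Dsc th) ^+ 2 = Dsc th.
Proof. by rewrite sqr_sqrtr // ltW // Dsc_gt0. Qed.

Lemma sqD_gt0 (th : R) : 0 < Num.sqrt (Dsc th).
Proof. by rewrite sqrtr_gt0 Dsc_gt0. Qed.

Lemma fpoly_tp (th : R) : fpoly r th (theta_p r th) = 0.
Proof.
rewrite /fpoly /theta_p -/(Dsc th).
apply: (eq_from (c := (Num.sqrt (Dsc th) ^+ 2 - Dsc th) / 4)); last by rewrite sqD subrr mul0r.
rewrite /Dsc; by field.
Qed.

Lemma fpoly_tm (th : R) : fpoly r th (theta_m r th) = 0.
Proof.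
rewrite /fpoly /theta_m -/(Dsc th).
apply: (eq_from (c := (Num.sqrt (Dsc th) ^+ 2 - Dsc th) / 4)); last by rewrite sqD subrr mul0r.
rewrite /Dsc; by field.
Qed.

Lemma alpha_diff (th : R) : (2 + th - theta_p r th) - (2 + th - theta_m r th) != 0.
Proof.
rewrite /theta_p /theta_m -/(Dsc th).
rewrite (_ : _ - _ = - Num.sqrt (Dsc th)); last by field.
by rewrite oppr_eq0 gt_eqF // sqD_gt0.
Qed.

Lemma alpha_sum (th : R) : (2 + th - theta_p r th) + (2 + th - theta_m r th) = 2 + th - r%:R.
Proof. rewrite /theta_p /theta_m; by field. Qed.

End Scal.

Section Main.
Variables (R : rcfType) (V : finType) (adj : rel V) (r : nat).
Hypothesis adj_sym : symmetric adj.
Hypothesis adj_irr : irreflexive adj.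
Hypothesis regular : forall x : V, deg adj x = r.
Local Notation E := (edgeT adj).
Local Notation T := (QV adj).
Local Notation LG := (lap R adj).
Local Notation LQ := (lap R (@qadj V adj)).
Local Notation rk := enum_rank.
Local Notation phi := (phiQ adj).

Lemma lap_tr : LG^T = LG.
Proof.
apply/matrixP => i j; rewrite !mxE eq_sym.
by case: eqP => [->|_] //; rewrite adj_sym.
Qed.

Lemma evec_dot (U : finType) (u : U) (w : 'rV[R]_#|U|) :
  (evec R u *m w^T) 0 0 = w 0 (rk u).
Proof. by rewrite /evec -rowE !mxE. Qed.

Lemma evec_entry (U : finType) (u w : U) : evec R u 0 (rk w) = (u == w)%:R.
Proof. by rewrite /evec mxE eqxx /= (inj_eq enum_rank_inj) eq_sym. Qed.
Definition PV (al : R) (x : 'rV[R]_#|V|) (u1 u2 : T) := qval al x u1 - qval al x u2.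

Lemma pair_dot (a b c d : T) (ep : R) (w : 'rV[R]_#|{: T}|) :
  ((evec R a - evec R b - ep *: (evec R c - evec R d)) *m w^T) 0 0 =
  (w 0 (rk a) - w 0 (rk b)) - ep * (w 0 (rk c) - w 0 (rk d)).
Proof.
by rewrite !mulmxBl -scalemxAl !mulmxBl !mxE -!evec_dot !mxE.
Qed.

Lemma projQ0 th l (Z : 'rV[R]_#|{: T}|) : fpoly r th l = 0 -> th != 2 * r%:R ->
  Z *m eigproj LQ l = 0 <->
  (forall x, x *m LG = th *: x -> Z *m (phi (2 + th - l) x)^T = 0).
Proof.
move=> f0 thn; rewrite eigproj0; split => H.
  by move=> x Hx; apply: H; exact: (phi_eig adj_sym adj_irr regular Hx f0).
move=> w Hw; have [x Hx ->] := eig_phi adj_sym adj_irr regular Hw f0 thn.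
exact: H.
Qed.

Lemma projQ0_pair th l (a b c d : T) ep : fpoly r th l = 0 -> th != 2 * r%:R ->
  (evec R a - evec R b - ep *: (evec R c - evec R d)) *m eigproj LQ l = 0 <->
  (forall x, x *m LG = th *: x ->
     PV (2 + th - l) x a b - ep * PV (2 + th - l) x c d = 0).
Proof.
move=> f0 thn; rewrite (projQ0 _ f0 thn); split => H x Hx; have := H x Hx.
  by move/mx11_eq0; rewrite pair_dot !phiQE.
by move=> H'; apply/mx11_eq0; rewrite pair_dot !phiQE.
Qed.

Lemma eqF_sub (X Y : 'M[R]_(1, #|{: T}|)) ep (M : 'M[R]_#|{: T}|) :
  (X *m M = ep *: (Y *m M)) <-> ((X - ep *: Y) *m M = 0).
Proof.
rewrite mulmxBl -scalemxAl; split => [->|/eqP]; first by rewrite subrr.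
by rewrite subr_eq0 => /eqP.
Qed.

Lemma WK mu l (X Y : 'rV[R]_#|{: T}|) : fpoly r mu l = 0 -> strongly_cospectral LQ X Y ->
  exists2 ep : R, (ep = 1 \/ ep = -1) &
    forall x, x *m LG = mu *: x -> (X - ep *: Y) *m (phi (2 + mu - l) x)^T = 0.
Proof.
move=> f0 SC.
case: (boolP (eigenvalue LQ l)) => ev.
  case: (SC l ev) => H; [exists 1; first by left | exists (-1); first by right].
  - move=> x Hx; have Hp := phi_eig adj_sym adj_irr regular Hx f0.
    have: (X - 1 *: Y) *m eigproj LQ l = 0 by apply/eqF_sub; rewrite scale1r.
    by move/eigproj0; apply.
  - move=> x Hx; have Hp := phi_eig adj_sym adj_irr regular Hx f0.
    have: (X - (-1) *: Y) *m eigproj LQ l = 0 by apply/eqF_sub; rewrite scaleN1r.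
    by move/eigproj0; apply.
exists 1; first by left.
move=> x Hx; have Hp := phi_eig adj_sym adj_irr regular Hx f0.
have -> : phi (2 + mu - l) x = 0.
  apply/eqP; apply: contraNT ev => nz; apply/eigenvalueP.
  by exists (phi (2 + mu - l) x).
by rewrite trmx0 mulmx0.
Qed.

Lemma sum_pick (F : V -> R) u : \sum_(w : V) F w * (u == w)%:R = F u.
Proof.
rewrite (bigD1 u) //= eqxx mulr1 big1 ?addr0 // => w wu.
by rewrite eq_sym (negPf wu) mulr0.
Qed.

Lemma sig_one (e : E) : sigE (const_mx 1 : 'rV[R]_#|V|) (val e) = 2.
Proof.
have [p [q [_ pq ->]]] := edge_ends adj_irr e.
by rewrite sig2 // !mxE.
Qed.

Lemma one_eig : (const_mx 1 : 'rV[R]_#|V|) *m LG = 0 *: const_mx 1.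
Proof.
apply/rowP => i; rewrite -(enum_valK i) (LG_row adj_sym adj_irr regular) !mxE.
under eq_bigr do rewrite mxE mulr1.
by rewrite (sum_adj R regular) mulr1 subrr mul0r.
Qed.

Lemma mixed_contra (a b c d : T) : isV a = isV b -> isV c != isV d ->
  strongly_cospectral LQ (evec R a - evec R b) (evec R c - evec R d) -> False.
Proof.
move=> ab cd SC.
have f0 : fpoly r (0 : R) (r%:R + 2) = 0 by rewrite /fpoly; ring.
have [ep ep1 H] := WK f0 SC.
have := H _ one_eig; move/mx11_eq0; rewrite pair_dot !phiQE.
have r0 := ler0n R r; clear H SC.
case: a ab => [a|a]; case: b => [b|b] //= _; case: c cd => [c|c]; case: d => [d|d] //= _;
  rewrite ?sig_one !mxE; case: ep1 => ->; lra.
Qed.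

Lemma SL (a1 a2 e1 e2 dl t : R) : a1 - a2 != 0 -> a1 + a2 != 0 ->
  (e1 = 1 \/ e1 = -1) -> (e2 = 1 \/ e2 = -1) ->
  a1 * dl - e1 * t = 0 -> a2 * dl - e2 * t = 0 -> dl = 0.
Proof.
move=> d0 s0 h1 h2 E1 E2.
have : (e2 * a1 - e1 * a2) * dl = 0.
  apply: (eq_from (c := e2 * (a1 * dl - e1 * t) - e1 * (a2 * dl - e2 * t))); first ring.
  by rewrite E1 E2 !mulr0 subrr.
move/eqP; rewrite mulf_eq0 => /orP [/eqP k0|/eqP //]; exfalso.
case: h1 h2 k0 => -> [] -> k0.
- by move/negP: d0; apply; apply/eqP; lra.
- by move/negP: s0; apply; apply/eqP; lra.
- by move/negP: s0; apply; apply/eqP; lra.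
- by move/negP: d0; apply; apply/eqP; lra.
Qed.

Lemma SL' (a1 a2 e1 e2 dl t : R) : a1 - a2 != 0 -> a1 + a2 != 0 ->
  (e1 = 1 \/ e1 = -1) -> (e2 = 1 \/ e2 = -1) ->
  t - e1 * (a1 * dl) = 0 -> t - e2 * (a2 * dl) = 0 -> dl = 0.
Proof.
move=> d0 s0 h1 h2 E1 E2.
have : (e1 * a1 - e2 * a2) * dl = 0.
  apply: (eq_from (c := (t - e2 * (a2 * dl)) - (t - e1 * (a1 * dl)))); first ring.
  by rewrite E1 E2 subrr.
move/eqP; rewrite mulf_eq0 => /orP [/eqP k0|/eqP //]; exfalso.
case: h1 h2 k0 => -> [] -> k0.
- by move/negP: d0; apply; apply/eqP; lra.
- by move/negP: s0; apply; apply/eqP; lra.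
- by move/negP: s0; apply; apply/eqP; lra.
- by move/negP: d0; apply; apply/eqP; lra.
Qed.

Lemma mxBE m n (A B : 'M[R]_(m,n)) i j : (A - B) i j = A i j - B i j.
Proof. by rewrite !mxE. Qed.

Lemma opp_contra (p q : V) (g h : E) : p != q ->
  (strongly_cospectral LQ (evec R (inl p : T) - evec R (inl q : T))
                          (evec R (inr g : T) - evec R (inr h : T)) \/
   strongly_cospectral LQ (evec R (inr g : T) - evec R (inr h : T))
                          (evec R (inl p : T) - evec R (inl q : T))) -> False.
Proof.
move=> pq SCs.
have key : forall mu (w : 'rV[R]_#|V|), mu != r%:R - 2 -> w *m LG = mu *: w ->
    w 0 (rk p) - w 0 (rk q) = 0.
  move=> mu w mun Hw.
  have ad := alpha_diff r mu.
  have as0 : (2 + mu - theta_p r mu) + (2 + mu - theta_m r mu) != 0.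
    by rewrite alpha_sum; apply: contra mun => /eqP H; apply/eqP; lra.
  case: SCs => SC.
  - have [e1 e1v H1] := WK (fpoly_tp r mu) SC.
    have [e2 e2v H2] := WK (fpoly_tm r mu) SC.
    move: (H1 w Hw) (H2 w Hw) => /mx11_eq0 E1 /mx11_eq0 E2.
    rewrite pair_dot !phiQE /= in E1; rewrite pair_dot !phiQE /= in E2.
    by apply: (SL ad as0 e1v e2v); rewrite mulrBr; [exact: E1 | exact: E2].
  - have [e1 e1v H1] := WK (fpoly_tp r mu) SC.
    have [e2 e2v H2] := WK (fpoly_tm r mu) SC.
    move: (H1 w Hw) (H2 w Hw) => /mx11_eq0 E1 /mx11_eq0 E2.
    rewrite pair_dot !phiQE /= in E1; rewrite pair_dot !phiQE /= in E2.
    by apply: (SL' ad as0 e1v e2v); rewrite mulrBr; [exact: E1 | exact: E2].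
set s : 'rV[R]_#|V| := evec R p - evec R q.
have Hs : s *m LG = (r%:R - 2) *: s.
  apply: (sym_complete lap_tr) => mu w mun Hw.
  by apply/mx11_eq0; rewrite /s mulmxBl mxBE !evec_dot; exact: key mun Hw.
have sE w : s 0 (rk w) = (p == w)%:R - (q == w)%:R by rewrite /s mxBE !evec_entry.
move/rowP/(_ (rk p)): Hs; rewrite (LG_row adj_sym adj_irr regular) [RHS]mxE.
under eq_bigr do rewrite sE mulrBr.
rewrite sumrB !sum_pick sE eqxx eq_sym (negPf pq) adj_irr => H.
have := ler0n R (adj p q); move: H; rewrite /=; lra.
Qed.

Lemma alpha_neq0 (th l : R) : fpoly r th l = 0 -> th != 2 * r%:R -> 2 + th - l != 0.
Proof.
move=> f0 thn; apply: contra thn => /eqP a0; apply/eqP.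
apply: (eq_from (c := fpoly r th l - (2 + th - l) ^+ 2 - (r%:R - 2 - th) * (2 + th - l))).
  by rewrite /fpoly; ring.
by rewrite f0 a0; ring.
Qed.

Lemma eqF0 (X : 'rV[R]_#|{: T}|) (M : 'M[R]_#|{: T}|) Y :
  (X *m M = 0) <-> ((X - 0 *: Y) *m M = 0).
Proof. by rewrite scale0r subr0. Qed.

Lemma proj0_pair (th l : R) (a b : T) : fpoly r th l = 0 -> th != 2 * r%:R ->
  (evec R a - evec R b) *m eigproj LQ l = 0 <->
  (forall x, x *m LG = th *: x -> PV (2 + th - l) x a b = 0).
Proof.
move=> f0 thn; rewrite (eqF0 _ _ (evec R a - evec R b)) (projQ0_pair a b a b 0 f0 thn).
by split => H x Hx; have := H x Hx; rewrite mul0r subr0.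
Qed.

Lemma PV_same (al1 al2 : R) (x : 'rV[R]_#|V|) (a b : T) : al1 != 0 -> al2 != 0 -> isV a = isV b ->
  (PV al1 x a b == 0) = (PV al2 x a b == 0).
Proof.
move=> n1 n2; case: a => [a|a]; case: b => [b|b] //= _; rewrite /PV /=.
by rewrite -!mulrBr !mulf_eq0 (negPf n1) (negPf n2).
Qed.

Lemma transfer (th l1 l2 ep : R) (a b c d : T) :
  fpoly r th l1 = 0 -> fpoly r th l2 = 0 -> th != 2 * r%:R ->
  (ep = 1 \/ ep = -1) ->
  strongly_cospectral LQ (evec R a - evec R b) (evec R c - evec R d) ->
  isV a = isV b -> isV c = isV d -> isV a = isV c ->
  ~ (forall x, x *m LG = th *: x -> PV (2 + th - l1) x a b = 0) ->
  (forall x, x *m LG = th *: x ->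
     PV (2 + th - l1) x a b - ep * PV (2 + th - l1) x c d = 0) ->
  (forall x, x *m LG = th *: x ->
     PV (2 + th - l2) x a b - ep * PV (2 + th - l2) x c d = 0).
Proof.
move=> f1 f2 thn epv SC ab cd ac nS G1.
have n1 := alpha_neq0 f1 thn; have n2 := alpha_neq0 f2 thn.
have [ep' epv' H] := WK f2 SC.
have G2 : forall x, x *m LG = th *: x ->
    PV (2 + th - l2) x a b - ep' * PV (2 + th - l2) x c d = 0.
  by move=> x Hx; move/mx11_eq0: (H x Hx); rewrite pair_dot !phiQE.
have [Eq|ne] := eqVneq ep' ep; first by rewrite -Eq.
have ep'E : ep' = - ep.
  by case: epv epv' ne => -> [] -> ne; rewrite ?opprK //; rewrite eqxx in ne.
exfalso; apply: nS => x Hx; move: (G1 x Hx) (G2 x Hx); rewrite ep'E.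
move: n1 n2; set a1 := 2 + th - l1; set a2 := 2 + th - l2 => n1 n2.
rewrite /PV; move: ab cd ac; clear -n1 n2.
case: a => [a|a]; case: b => [b|b]; case: c => [c|c]; case: d => [d|d] => //= _ _ _.
  move=> E1 E2.
  have F1 : a1 * ((x 0 (rk a) - x 0 (rk b)) - ep * (x 0 (rk c) - x 0 (rk d))) = 0.
    by rewrite -E1; ring.
  have F2 : a2 * ((x 0 (rk a) - x 0 (rk b)) + ep * (x 0 (rk c) - x 0 (rk d))) = 0.
    by rewrite -E2; ring.
  move/eqP: F1; rewrite mulf_eq0 (negPf n1) /= => /eqP F1.
  move/eqP: F2; rewrite mulf_eq0 (negPf n2) /= => /eqP F2.
  have H0 : x 0 (rk a) - x 0 (rk b) = 0.
    by move: F1 F2; move: (x 0 (rk a) - x 0 (rk b)) (ep * _) => u v; lra.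
  by rewrite -mulrBr H0 mulr0.
rewrite mulNr.
move: (sigE x (sval a) - sigE x (sval b)) (ep * (sigE x (sval c) - sigE x (sval d))) => u v.
lra.
Qed.

Lemma suppE (th l : R) (a b : T) : fpoly r th l = 0 -> th != 2 * r%:R ->
  (in_supp LQ (evec R a - evec R b) l <->
   ~ (forall x, x *m LG = th *: x -> PV (2 + th - l) x a b = 0)).
Proof.
move=> f0 thn; rewrite /in_supp -(proj0_pair _ _ f0 thn).
split => [/negP H E0 | H]; first by apply: H; apply/eqP.
by apply/negP => /eqP.
Qed.

Lemma lamE (th l ep : R) (a b c d : T) : fpoly r th l = 0 -> th != 2 * r%:R ->
  ((evec R a - evec R b) *m eigproj LQ l = ep *: ((evec R c - evec R d) *m eigproj LQ l) <->
   (forall x, x *m LG = th *: x ->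
     PV (2 + th - l) x a b - ep * PV (2 + th - l) x c d = 0)).
Proof. by move=> f0 thn; rewrite eqF_sub (projQ0_pair _ _ _ _ _ f0 thn). Qed.

Lemma lam_transfer (th l1 l2 ep : R) (a b c d : T) :
  fpoly r th l1 = 0 -> fpoly r th l2 = 0 -> th != 2 * r%:R ->
  (ep = 1 \/ ep = -1) ->
  strongly_cospectral LQ (evec R a - evec R b) (evec R c - evec R d) ->
  isV a = isV b -> isV c = isV d -> isV a = isV c ->
  in_supp LQ (evec R a - evec R b) l1 /\
  (evec R a - evec R b) *m eigproj LQ l1 = ep *: ((evec R c - evec R d) *m eigproj LQ l1) ->
  in_supp LQ (evec R a - evec R b) l2 /\
  (evec R a - evec R b) *m eigproj LQ l2 = ep *: ((evec R c - evec R d) *m eigproj LQ l2).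
Proof.
move=> f1 f2 thn epv SC ab cd ac [S1 L1].
move/(suppE a b f1 thn): S1 => S1; move/(lamE ep a b c d f1 thn): L1 => L1.
have n1 := alpha_neq0 f1 thn; have n2 := alpha_neq0 f2 thn.
split.
  apply/(suppE a b f2 thn) => H; apply: S1 => x Hx; apply/eqP.
  by rewrite (PV_same _ n1 n2 ab); apply/eqP; exact: H.
apply/(lamE ep a b c d f2 thn).
exact: (transfer f1 f2 thn epv SC ab cd ac S1 L1).
Qed.

End Main.

Theorem theorem3p1 (R : rcfType) (V : finType) (adj : rel V) (r : nat)
    (adj_sym : symmetric adj) (adj_irr : irreflexive adj)
    (regular : forall x : V, deg adj x = r) (r_ge2 : (2 <= r)%N)
    (a b : QV adj) (a_neq_b : a != b)
    (same_side : (isV a && isV b) || (~~ isV a && ~~ isV b))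
    (theta : R) (theta_eig : eigenvalue (lap R adj) theta)
    (theta_neq : theta != 2 * r%:R) :
  let LQ := lap R (@qadj V adj) in
  let x := evec R a - evec R b in
  (in_supp LQ x (theta_p r theta) <-> in_supp LQ x (theta_m r theta)) /\
  (forall c d : QV adj, c != d ->
     strongly_cospectral LQ x (evec R c - evec R d) ->
     (in_LambdaP LQ x (evec R c - evec R d) (theta_p r theta) <->
      in_LambdaP LQ x (evec R c - evec R d) (theta_m r theta)) /\
     (in_LambdaM LQ x (evec R c - evec R d) (theta_p r theta) <->
      in_LambdaM LQ x (evec R c - evec R d) (theta_m r theta))).
Proof.
move=> LQ X; rewrite /LQ /X; clear LQ X.
have ab : isV a = isV b by move: same_side; case: (isV a); case: (isV b).
have fp := fpoly_tp (R:=R) r theta; have fm := fpoly_tm (R:=R) r theta.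
have np := alpha_neq0 fp theta_neq; have nm := alpha_neq0 fm theta_neq.
split.
  rewrite (suppE adj_sym adj_irr regular _ _ fp theta_neq).
  rewrite (suppE adj_sym adj_irr regular _ _ fm theta_neq).
  split => H1 H2; apply: H1 => x Hx; apply/eqP;
    [rewrite (PV_same _ np nm ab) | rewrite (PV_same _ nm np ab)]; apply/eqP; exact: H2.
move=> c d cd SC.
have cdV : isV c = isV d.
  apply/eqP; apply: contraT => ncd; exfalso.
  exact: (mixed_contra adj_sym adj_irr regular ab ncd SC).
have acV : isV a = isV c.
  apply/eqP; apply: contraT => nac; exfalso.
  move: SC ab cdV nac a_neq_b cd; clear same_side.
  case: a => [p|g]; case: b => [q|h]; case: c => [p'|g']; case: d => [q'|h'] //= SC _ _ _ ne1 ne2.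
    apply: (opp_contra adj_sym adj_irr regular (R := R) (p := p) (q := q) (g := g') (h := h') _ (or_introl SC)).
    by apply: contraNneq ne1 => ->.
  apply: (opp_contra adj_sym adj_irr regular (R := R) (p := p') (q := q') (g := g) (h := h) _ (or_intror SC)).
  by apply: contraNneq ne2 => ->.
have T1 := lam_transfer adj_sym adj_irr regular (ep := 1) fp fm theta_neq (or_introl erefl) SC ab cdV acV.
have T2 := lam_transfer adj_sym adj_irr regular (ep := 1) fm fp theta_neq (or_introl erefl) SC ab cdV acV.
have T3 := lam_transfer adj_sym adj_irr regular (ep := -1) fp fm theta_neq (or_intror erefl) SC ab cdV acV.
have T4 := lam_transfer adj_sym adj_irr regular (ep := -1) fm fp theta_neq (or_intror erefl) SC ab cdV acV.
rewrite /in_LambdaP /in_LambdaM; rewrite !scale1r in T1 T2; rewrite !scaleN1r in T3 T4.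
by split; split.
Qed.
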